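(* Let $m,n,u\in\mathbb{R}$ and let $(G_3,g,J)$ be the three-dimensional Lorentzian Lie group described in the context. Write $\mathbb{V}_{RC}$ for the real vector space of left-invariant Ricci collineations $\xi=\lambda_1\overline{e}_1+\lambda_2\overline{e}_2+\lambda_3\overline{e}_3$ ($\lambda_i\in\mathbb{R}$ constants) associated to the Yano connection. Then: (1) if $mnu=0$, every left-invariant vector field is a left-invariant Ricci collineation, i.e. $\mathbb{V}_{RC}=\langle\overline{e}_1,\overline{e}_2,\overline{e}_3\rangle$; (2) if $mnu\neq0$, then $\mathbb{V}_{RC}=\langle\overline{e}_3\rangle$.
   Context: $G_3$ is a connected three-dimensional Lie group whose Lie algebra has a basis $\{\overline{e}_1,\overline{e}_2,\overline{e}_3\}$ (left-invariant vector fields) with $[\overline{e}_1,\overline{e}_2]=-u\overline{e}_3$, $[\overline{e}_1,\overline{e}_3]=-n\overline{e}_2$, $[\overline{e}_2,\overline{e}_3]=m\overline{e}_1$. The metric $g$ is the left-invariant Lorentzian metric with $g(\overline{e}_1,\overline{e}_1)=g(\overline{e}_2,\overline{e}_2)=1$, $g(\overline{e}_3,\overline{e}_3)=-1$, $g(\overline{e}_i,\overline{e}_j)=0$ for $i\neq j$. $J$ is the left-invariant product structure with $J\overline{e}_1=\overline{e}_1$, $J\overline{e}_2=\overline{e}_2$, $J\overline{e}_3=-\overline{e}_3$. With $\nabla^{LC}$ the Levi-Civita connection of $g$, the Yano connection is $\nabla^{*}_XY=\nabla^{LC}_XY-\frac12(\nabla^{LC}_YJ)JX-\frac14[(\nabla^{LC}_XJ)JY-(\nabla^{LC}_{JX}J)Y]$;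 its curvature is $R^{*}(X,Y)Z=\nabla^{*}_X\nabla^{*}_YZ-\nabla^{*}_Y\nabla^{*}_XZ-\nabla^{*}_{[X,Y]}Z$; its Ricci tensor is $\mathrm{Ric}^{*}(X,Y)=-g(R^{*}(X,\overline{e}_1)Y,\overline{e}_1)-g(R^{*}(X,\overline{e}_2)Y,\overline{e}_2)+g(R^{*}(X,\overline{e}_3)Y,\overline{e}_3)$; and $\overline{\mathrm{Ric}^{*}}(X,Y)=\frac12(\mathrm{Ric}^{*}(X,Y)+\mathrm{Ric}^{*}(Y,X))$. For a left-invariant vector field $\xi$, $(\mathrm{L}_{\xi}\overline{\mathrm{Ric}^{*}})(X,Y)=\xi(\overline{\mathrm{Ric}^{*}}(X,Y))-\overline{\mathrm{Ric}^{*}}([\xi,X],Y)-\overline{\mathrm{Ric}^{*}}(X,[\xi,Y])$; $\xi$ is a left-invariant Ricci collineation if $\mathrm{L}_{\xi}\overline{\mathrm{Ric}^{*}}=0$. *)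

(* Defs.v *)
(* Left-invariant objects on G_3 are modelled on the Lie
   algebra R^3 = 'rV[R]_3 with basis ebase 0, ebase 1, ebase 2
   (= \bar e_1, \bar e_2, \bar e_3). *)
From HB Require Import structures.
From mathcomp Require Import all_boot all_order all_algebra.
From mathcomp Require Import reals.
Set Implicit Arguments. Unset Strict Implicit. Unset Printing Implicit Defensive.
Import Order.TTheory GRing.Theory Num.Theory.
Local Open Scope ring_scope.

Section G3.
Variables (R : realType) (m n u : R).

Definition vec := 'rV[R]_3.

Definition ebase (i : 'I_3) : vec := delta_mx 0 i.

Definition brk (i j : 'I_3) : vec :=
  match nat_of_ord i, nat_of_ord j with
  | 0, 1 => (- u) *: ebase (inord 2)
  | 1, 0 => u *: ebase (inord 2)
  | 0, 2 => (- n) *: ebase (inord 1)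
  | 2, 0 => n *: ebase (inord 1)
  | 1, 2 => m *: ebase (inord 0)
  | 2, 1 => (- m) *: ebase (inord 0)
  | _, _ => 0
  end.

Definition lie (X Y : vec) : vec :=
  \sum_(i < 3) \sum_(j < 3) (X 0 i * Y 0 j) *: brk i j.

Definition eps (i : 'I_3) : R := if nat_of_ord i == 2%N then -1 else 1.

Definition gmet (X Y : vec) : R := \sum_(i < 3) eps i * X 0 i * Y 0 i.

(* Levi-Civita connection on left-invariant fields (Koszul formula):
   2 g(nabla_X Y, Z) = g([X,Y],Z) - g([Y,Z],X) + g([Z,X],Y) *)
Definition nablaLC (X Y : vec) : vec :=
  \sum_(k < 3) (eps k / 2 * (gmet (lie X Y) (ebase k)
                 - gmet (lie Y (ebase k)) X + gmet (lie (ebase k) X) Y))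
               *: ebase k.

Definition Jop (X : vec) : vec := \sum_(k < 3) (eps k * X 0 k) *: ebase k.

Definition nablaJ (X Y : vec) : vec := nablaLC X (Jop Y) - Jop (nablaLC X Y).

Definition nablaY (X Y : vec) : vec :=
  nablaLC X Y - (1 / 2) *: nablaJ Y (Jop X)
  - (1 / 4) *: (nablaJ X (Jop Y) - nablaJ (Jop X) Y).

Definition curvY (X Y Z : vec) : vec :=
  nablaY X (nablaY Y Z) - nablaY Y (nablaY X Z) - nablaY (lie X Y) Z.

Definition RicY (X Y : vec) : R :=
  - gmet (curvY X (ebase (inord 0)) Y) (ebase (inord 0))
  - gmet (curvY X (ebase (inord 1)) Y) (ebase (inord 1))
  + gmet (curvY X (ebase (inord 2)) Y) (ebase (inord 2)).

Definition RicYsym (X Y : vec) : R := (RicY X Y + RicY Y X) / 2.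

(* Lie derivative along a left-invariant xi; the term xi(Ric(X,Y)) vanishes
   since Ric(X,Y) is constant for left-invariant X, Y. *)
Definition lieDerRic (xi X Y : vec) : R :=
  - RicYsym (lie xi X) Y - RicYsym X (lie xi Y).

Definition ricci_collineation (xi : vec) : Prop :=
  forall X Y : vec, lieDerRic xi X Y = 0.

End G3.

(* Main.v *)
Require Import Defs.
From HB Require Import structures.
From mathcomp Require Import all_boot all_order all_algebra.
From mathcomp Require Import reals ring.
Import Order.TTheory GRing.Theory Num.Theory.
Local Open Scope ring_scope.
Set Implicit Arguments. Unset Strict Implicit.

Section P.
Variables (R : realType) (m n u : R).
Notation o0 := (@Ordinal 3 0 isT).
Notation o1 := (@Ordinal 3 1 isT).
Notation o2 := (@Ordinal 3 2 isT).

Lemma sum3 (F : 'I_3 -> R) : \sum_(i < 3) F i = F o0 + F o1 + F o2.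
Proof.
rewrite !big_ord_recl big_ord0 addr0 addrA.
by congr (F _ + F _ + F _); apply: val_inj.
Qed.

Lemma row3P (X Y : vec R) : X 0 o0 = Y 0 o0 -> X 0 o1 = Y 0 o1 -> X 0 o2 = Y 0 o2 -> X = Y.
Proof.
move=> h0 h1 h2; apply/rowP => k;
case: k => -[|[|[|//]]] Hk; by rewrite ?(bool_irrelevance Hk isT).
Qed.

Lemma inord0 : inord 0 = o0 :> 'I_3. Proof. by apply/val_inj; rewrite /= inordK. Qed.
Lemma inord1 : inord 1 = o1 :> 'I_3. Proof. by apply/val_inj; rewrite /= inordK. Qed.
Lemma inord2 : inord 2 = o2 :> 'I_3. Proof. by apply/val_inj; rewrite /= inordK. Qed.

Lemma eb (i k : 'I_3) : ebase R i 0 k = (i == k)%:R.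
Proof. by rewrite /ebase mxE eqxx eq_sym. Qed.

Lemma sumE (F : 'I_3 -> vec R) k : (\sum_(i < 3) F i) 0 k = \sum_(i<3) F i 0 k.
Proof. by rewrite summxE. Qed.

Ltac ent := do 3 rewrite ?sumE ?sum3; rewrite /brk /= ?inord0 ?inord1 ?inord2 ?(mxE, eb) /=.


Lemma lie0 (X Y : vec R) : lie m n u X Y 0 o0 = m * (X 0 o1 * Y 0 o2 - X 0 o2 * Y 0 o1).
Proof. rewrite /lie; ent; ring. Qed.
Lemma lie1 (X Y : vec R) : lie m n u X Y 0 o1 = - n * (X 0 o0 * Y 0 o2 - X 0 o2 * Y 0 o0).
Proof. rewrite /lie; ent; ring. Qed.
Lemma lie2 (X Y : vec R) : lie m n u X Y 0 o2 = - u * (X 0 o0 * Y 0 o1 - X 0 o1 * Y 0 o0).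
Proof. rewrite /lie; ent; ring. Qed.
Lemma gmetE (X Y : vec R) : gmet X Y = X 0 o0 * Y 0 o0 + X 0 o1 * Y 0 o1 - X 0 o2 * Y 0 o2.
Proof. rewrite /gmet sum3 /eps /=; ring. Qed.
Lemma J0 (X : vec R) : Jop X 0 o0 = X 0 o0. Proof. rewrite /Jop; ent; rewrite /eps /=; ring. Qed.
Lemma J1 (X : vec R) : Jop X 0 o1 = X 0 o1. Proof. rewrite /Jop; ent; rewrite /eps /=; ring. Qed.
Lemma J2 (X : vec R) : Jop X 0 o2 = - X 0 o2. Proof. rewrite /Jop; ent; rewrite /eps /=; ring. Qed.

Ltac ent2 := rewrite ?(lie0, lie1, lie2, gmetE, J0, J1, J2, eb) /eps /=.

Lemma LC0 (X Y : vec R) : nablaLC m n u X Y 0 o0 = (X 0 o1 * Y 0 o2 * (m - n + u) - X 0 o2 * Y 0 o1 * (m + n - u)) / 2.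
Proof. rewrite /nablaLC; ent; ent2; ring. Qed.
Lemma LC1 (X Y : vec R) : nablaLC m n u X Y 0 o1 = (X 0 o0 * Y 0 o2 * (m - n - u) + X 0 o2 * Y 0 o0 * (m + n - u)) / 2.
Proof. rewrite /nablaLC; ent; ent2; ring. Qed.
Lemma LC2 (X Y : vec R) : nablaLC m n u X Y 0 o2 = (X 0 o0 * Y 0 o1 * (m - n - u) + X 0 o1 * Y 0 o0 * (m - n + u)) / 2.
Proof. rewrite /nablaLC; ent; ent2; ring. Qed.

Ltac ent3 := rewrite /nablaY /nablaJ ?mxE ?(LC0, LC1, LC2, J0, J1, J2, mxE).

Lemma Y0 (X Y : vec R) : nablaY m n u X Y 0 o0 = - m * X 0 o2 * Y 0 o1.
Proof. ent3. by field. Qed.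
Lemma Y1 (X Y : vec R) : nablaY m n u X Y 0 o1 = n * X 0 o2 * Y 0 o0.
Proof. ent3. by field. Qed.
Lemma Y2 (X Y : vec R) : nablaY m n u X Y 0 o2 = u * (X 0 o1 * Y 0 o0 - X 0 o0 * Y 0 o1).
Proof. ent3. by field. Qed.
Definition mk3 (a b c : R) : vec R := \row_(k < 3) [:: a; b; c]`_k.
Lemma mkE a b c k : mk3 a b c 0 k = [:: a; b; c]`_k. Proof. by rewrite mxE. Qed.
Lemma mk0 a b c : mk3 a b c 0 o0 = a. Proof. by rewrite mxE. Qed.
Lemma mk1 a b c : mk3 a b c 0 o1 = b. Proof. by rewrite mxE. Qed.
Lemma mk2 a b c : mk3 a b c 0 o2 = c. Proof. by rewrite mxE. Qed.
Lemma subE (A B : vec R) k : (A - B) 0 k = A 0 k - B 0 k.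
Proof. by rewrite !mxE. Qed.

Lemma nYv (X Y : vec R) : nablaY m n u X Y =
  mk3 (- m * X 0 o2 * Y 0 o1) (n * X 0 o2 * Y 0 o0) (u * (X 0 o1 * Y 0 o0 - X 0 o0 * Y 0 o1)).
Proof. by apply: row3P; rewrite ?(mk0, mk1, mk2) ?(Y0, Y1, Y2). Qed.
Lemma lieV (X Y : vec R) : lie m n u X Y =
  mk3 (m * (X 0 o1 * Y 0 o2 - X 0 o2 * Y 0 o1)) (- n * (X 0 o0 * Y 0 o2 - X 0 o2 * Y 0 o0)) (- u * (X 0 o0 * Y 0 o1 - X 0 o1 * Y 0 o0)).
Proof. by apply: row3P; rewrite ?(mk0, mk1, mk2) ?(lie0, lie1, lie2). Qed.

Lemma curvV (X Y Z : vec R) : curvY m n u X Y Z =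
  mk3 (m * u * Z 0 o1 * (X 0 o1 * Y 0 o0 - X 0 o0 * Y 0 o1)) (n * u * Z 0 o0 * (X 0 o0 * Y 0 o1 - X 0 o1 * Y 0 o0)) 0.
Proof.
rewrite /curvY !nYv !lieV; apply: row3P; rewrite !subE !(mk0, mk1, mk2); ring.
Qed.
Lemma gEk (A : vec R) k : gmet A (ebase R k) = eps R k * A 0 k.
Proof. rewrite gmetE !eb; case: k => -[|[|[|//]]] Hk; rewrite /eps (bool_irrelevance Hk isT) /=; ring. Qed.


Lemma RicE (X Y : vec R) : RicYsym m n u X Y = - n * u * X 0 o0 * Y 0 o0 - m * u * X 0 o1 * Y 0 o1.
Proof.
rewrite /RicYsym /RicY !inord0 !inord1 !inord2.
have h0 k : ebase R o0 0 k = (o0 == k)%:R := eb o0 k.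
have h1 k : ebase R o1 0 k = (o1 == k)%:R := eb o1 k.
have h2 k : ebase R o2 0 k = (o2 == k)%:R := eb o2 k.
move: (ebase R o0) (ebase R o1) (ebase R o2) h0 h1 h2 => e0 e1 e2 h0 h1 h2.
rewrite !curvV. rewrite !gmetE. rewrite !mkE !h0 !h1 !h2 /=.
by field.
Qed.

Lemma LDE (xi X Y : vec R) : lieDerRic m n u xi X Y =
  m * n * u * (xi 0 o1 * (X 0 o2 * Y 0 o0 + X 0 o0 * Y 0 o2) - xi 0 o0 * (X 0 o2 * Y 0 o1 + X 0 o1 * Y 0 o2)).
Proof. rewrite /lieDerRic !RicE !lieV !mkE /=. ring. Qed.
End P.

Notation o0 := (@Ordinal 3 0 isT).
Notation o1 := (@Ordinal 3 1 isT).
Notation o2 := (@Ordinal 3 2 isT).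

Unset Implicit Arguments.
Theorem theorem3p9 (R : realType) (m n u : R) :
  (m * n * u = 0 -> forall xi : vec R, ricci_collineation m n u xi) /\
  (m * n * u != 0 -> forall xi : vec R,
      ricci_collineation m n u xi <-> exists c : R, xi = c *: ebase R (inord 2)).
Proof.
split.
  by move=> h xi X Y; rewrite LDE h !mul0r.
move=> h xi; split.
  move=> H.
  have Hb := H (ebase R o2) (ebase R o0).
  have Ha := H (ebase R o2) (ebase R o1).
  rewrite LDE !eb /= in Hb; rewrite LDE !eb /= in Ha.
  have hb : m * n * u * xi 0 o1 = 0 by rewrite -Hb; ring.
  have ha : m * n * u * xi 0 o0 = 0 by rewrite -[RHS]oppr0 -Ha; ring.
  move/eqP: hb; rewrite mulf_eq0 (negbTE h) /= => /eqP hb.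
  move/eqP: ha; rewrite mulf_eq0 (negbTE h) /= => /eqP ha.
  exists (xi 0 o2); rewrite inord2; apply: row3P; rewrite mxE eb /= ?ha ?hb; ring.
case=> c -> X Y; rewrite LDE inord2 !mxE ?eb /=; ring.
Qed.
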